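(* Let $a=a_1a_2\cdots a_n$ be a signed permutation on $[n]$, let $\tilde s=(0,a_1,a_2,\ldots,a_n,-a_n,-a_{n-1},\ldots,-a_1)$ and $p_r=(-1,-2,\ldots,-n+1,-n,n,n-1,\ldots,2,1,0)$, both $(2n+1)$-cycles on $\{-n,\ldots,-1,0,1,\ldots,n\}$. Then $$d_r(a)\ \ge\ \frac{2n+1-C(p_r\tilde s)}{2}.$$
   Context: Permutations are multiplied as composition of maps, $(\sigma\tau)(x)=\sigma(\tau(x))$; $C(\pi)$ is the number of cycles of $\pi$, fixed points included. A signed permutation on $[n]$ is a sequence $a_1\cdots a_n$ with $a_k\in\{\pm1,\ldots,\pm n\}$ such that $|a_1|,\ldots,|a_n|$ is a permutation of $[n]$. A reversal $\varrho_{i,j}$ ($1\le i\le j\le n$) changes $a$ into $a_1\cdots a_{i-1}(-a_j)(-a_{j-1})\cdots(-a_i)a_{j+1}\cdots a_n$. The reversal distance $d_r(a)$ is the minimum number of reversals needed to transform $a$ into $12\cdots n$. *)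

(* Defs.v *)
From mathcomp Require Import all_boot all_order all_algebra.
Unset Strict Implicit. Unset Printing Implicit Defensive.
Import Order.TTheory GRing.Theory Num.Theory.
Local Open Scope ring_scope.

Definition signed_perm (n : nat) (a : seq int) : bool :=
  (size a == n) && perm_eq [seq `|x|%N | x <- a] (iota 1 n).

Definition id_signed (n : nat) : seq int := [seq (k%:Z) | k <- iota 1 n].

(* reversal rho_{i,j} (1-based, 1 <= i <= j <= n):
   a_1..a_{i-1} (-a_j) ... (-a_i) a_{j+1} .. a_n *)
Definition reversal (i j : nat) (a : seq int) : seq int :=
  take i.-1 a ++ [seq - x | x <- rev (drop i.-1 (take j a))] ++ drop j a.

Definition valid_reversal (n : nat) (ij : nat * nat) : bool :=
  (1 <= ij.1)%N && (ij.1 <= ij.2)%N && (ij.2 <= n)%N.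

Definition apply_reversals (rs : seq (nat * nat)) (a : seq int) : seq int :=
  foldl (fun b ij => reversal ij.1 ij.2 b) a rs.

(* a can be transformed into 12...n by some sequence of exactly k reversals;
   the reversal distance d_r(a) is the least such k. *)
Definition sortable_in (n : nat) (a : seq int) (k : nat) : Prop :=
  exists rs : seq (nat * nat),
    [/\ size rs = k, all (valid_reversal n) rs & apply_reversals rs a = id_signed n].

(* The set {-n,...,n} is encoded as 'I_(2n+1): the ordinal x encodes x - n. *)
Definition enc (n : nat) (v : int) : 'I_(n.*2.+1) := inord (absz (v + n%:Z)).

Definition s_tilde_seq (a : seq int) : seq int :=
  [:: 0] ++ a ++ [seq - x | x <- rev a].

Definition p_r_seq (n : nat) : seq int :=
  [seq - (k%:Z) | k <- iota 1 n] ++ [seq (k%:Z) | k <- rev (iota 1 n)] ++ [:: 0].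

Definition cycle_fun (n : nat) (c : seq int) : 'I_(n.*2.+1) -> 'I_(n.*2.+1) :=
  next [seq enc n v | v <- c].

Definition s_tilde (n : nat) (a : seq int) := cycle_fun n (s_tilde_seq a).
Definition p_r (n : nat) := cycle_fun n (p_r_seq n).

(* number of cycles (fixed points included) of a bijection of a finite type *)
Definition ncycles (T : finType) (f : T -> T) : nat := fcard f T.
Arguments ncycles {T} f.

(* Main.v *)
Require Import Defs.
From mathcomp Require Import all_boot all_order all_algebra.
From mathcomp Require Import fingroup perm zify.
Set Implicit Arguments. Unset Strict Implicit. Unset Printing Implicit Defensive.
Import Order.TTheory GRing.Theory Num.Theory.

Section SeqNext.
Variable T : eqType.
Implicit Types (L p q t u v : seq T) (x y z h : T).

Lemma nextL L u x y v : L = u ++ x :: y :: v -> uniq L -> next L x = y.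
Proof.
move=> -> U; rewrite next_nth mem_cat inE eqxx orbT.
have xu : x \notin u.
  by move: U; rewrite cat_uniq => /and3P[_ /hasPn H _]; apply: H; rewrite inE eqxx.
rewrite index_cat (negbTE xu) /= eqxx addn0.
case: u {U xu} => [|z u] //=.
by rewrite nth_cat ltnNge leqnSn /= subSnn.
Qed.

Lemma next_wrap L a M h t : L = a :: M ++ h :: t -> uniq L -> next L (last h t) = a.
Proof.
move=> -> U.
have -> : last h t = last a (M ++ h :: t) by rewrite last_cat.
rewrite next_nth mem_last index_last //.
by case: (M ++ h :: t) => //= ? ?; rewrite nth_default.
Qed.

Lemma next_blockend L p h t y q : L = p ++ h :: t ++ y :: q -> uniq L -> next L (last h t) = y.
Proof.
move=> -> U; apply: (nextL (u := p ++ belast h t) (v := q)) => //.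
by rewrite -cat_cons (lastI h t) cat_rcons -!catA.
Qed.

Lemma next_interior L p h t q x : L = p ++ h :: t ++ q -> uniq L ->
  x \in h :: t -> x != last h t -> next L x = next (h :: t) x.
Proof.
move=> -> U xin xl.
have E : last h t = last x (h :: t) by [].
rewrite E -cat_cons in xl U *.
move: (h :: t) xin xl U => w xin xl U.
case/splitPr: xin xl U => u [|y v] xl U.
  by move: xl; rewrite last_cat /= eqxx.
rewrite (nextL (u := p ++ u) (y := y) (v := v ++ q)); last 2 first.
- by rewrite -!catA.
- done.
rewrite (nextL (u := u) (y := y) (v := v)) //.
by move: U; rewrite uniq_catCA cat_uniq => /and3P[].
Qed.

Lemma disj L p s1 q s2 r x y : L = p ++ s1 ++ q ++ s2 ++ r -> uniq L ->
  x \in s1 -> y \in s2 -> x != y.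
Proof.
move=> -> U xs ys.
have : uniq (s1 ++ s2).
  apply: subseq_uniq U; rewrite -[s1 ++ s2]cat0s; apply: cat_subseq (sub0seq p) _.
  apply: cat_subseq (subseq_refl s1) _; rewrite -[s2]cat0s.
  by apply: cat_subseq (sub0seq q) _; apply: prefix_subseq.
rewrite cat_uniq => /and3P[_ /hasPn H _].
by apply: contraNneq (H y ys) => <-.
Qed.

End SeqNext.

Ltac eqs := by do 5!(rewrite /= ?cats0 -?catA).

Lemma block_swap (T : finType) (a b w : T) A B W Y :
  uniq ((a :: A) ++ Y ++ (b :: B) ++ (w :: W)) ->
  exists x1 y1 x2 y2 : T, forall x,
    next ((a :: A) ++ (w :: W) ++ (b :: B) ++ Y) x =
    next ((a :: A) ++ Y ++ (b :: B) ++ (w :: W)) (tperm x1 y1 (tperm x2 y2 x)).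
Proof.
move=> U.
have U' : uniq ((a :: A) ++ (w :: W) ++ (b :: B) ++ Y).
  rewrite -(perm_uniq (_ : perm_eq ((a :: A) ++ Y ++ (b :: B) ++ (w :: W)) _)) //.
  by rewrite perm_cat2l perm_catC -catA perm_catCA.
set lA := last a A; set lB := last b B; set lW := last w W.
have mA : lA \in a :: A by apply: mem_last.
have mB : lB \in b :: B by apply: mem_last.
have mW : lW \in w :: W by apply: mem_last.
case: Y U U' => [|y Y] U U'.
- exists lA, lW, lA, lB => x.
  have nAB : lA != lB.
    by apply: (@disj _ _ [::] (a::A) [::] (b::B) (w::W) _ _ _ U).
  have nAW : lA != lW.
    by apply: (@disj _ _ [::] (a::A) (b::B) (w::W) [::] _ _ _ U) => //; eqs.
  have nBW : lB != lW.
    by apply: (@disj _ _ (a::A) (b::B) [::] (w::W) [::] _ _ _ U) => //; eqs.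
  have [->|xA] := eqVneq x lA.
    rewrite tpermL tpermD // 1?eq_sym //.
    rewrite (next_blockend (p:=[::]) (h:=a) (t:=A) (y:=w) (q:=W ++ b::B) _ U'); try eqs.
    by rewrite (next_blockend (p:=a::A) (h:=b) (t:=B) (y:=w) (q:=W) _ U); try eqs.
  have [->|xB] := eqVneq x lB.
    rewrite tpermR tpermL.
    rewrite (next_wrap (a:=a) (M := A ++ w :: W) (h:=b) (t:=B) _ U'); try eqs.
    by rewrite (next_wrap (a:=a) (M := A ++ b :: B) (h:=w) (t:=W) _ U); try eqs.
  have [->|xW] := eqVneq x lW.
    rewrite (@tpermD _ lA lB lW) // tpermR.
    rewrite (next_blockend (p:=a::A) (h:=w) (t:=W) (y:=b) (q:=B) _ U'); try eqs.
    by rewrite (next_blockend (p:=[::]) (h:=a) (t:=A) (y:=b) (q:=B ++ w::W) _ U); try eqs.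
  rewrite (@tpermD _ lA lB x) 1?eq_sym // (@tpermD _ lA lW x) 1?eq_sym //.
  have [xin|xA'] := boolP (x \in a :: A).
    rewrite (next_interior (p:=[::]) (h:=a) (t:=A) (q:=w :: W ++ b :: B) _ U') //; try eqs.
    by rewrite (next_interior (p:=[::]) (h:=a) (t:=A) (q:=b :: B ++ w :: W) _ U) //; try eqs.
  have [xin|xB'] := boolP (x \in b :: B).
    rewrite (next_interior (p:=a :: A ++ w :: W) (h:=b) (t:=B) (q:=[::]) _ U') //; try eqs.
    by rewrite (next_interior (p:=a::A) (h:=b) (t:=B) (q:=w :: W) _ U) //; try eqs.
  have [xin|xW'] := boolP (x \in w :: W).
    rewrite (next_interior (p:=a :: A) (h:=w) (t:=W) (q:=b :: B) _ U') //; try eqs.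
    by rewrite (next_interior (p:=a::A ++ b :: B) (h:=w) (t:=W) (q:=[::]) _ U) //; try eqs.
  have nin : forall L, L = (a::A) ++ (b :: B) ++ (w :: W) \/ L = (a::A) ++ (w :: W) ++ (b :: B) -> next L x = x.
    move=> L HL; rewrite next_nth; case: ifP => // /negP[].
    by case: HL => ->; rewrite !mem_cat (negbTE xA') (negbTE xB') (negbTE xW').
  rewrite [LHS]nin; last by right; eqs.
  by rewrite nin //; left; eqs.
set lY := last y Y.
have mY : lY \in y :: Y by apply: mem_last.
exists lY, lW, lA, lB => x.
have nAY : lA != lY.
  by apply: (@disj _ _ [::] (a::A) [::] (y::Y) ((b::B) ++ (w::W)) _ _ _ U) => //; try eqs.
have nAB : lA != lB.
  by apply: (@disj _ _ [::] (a::A) (y::Y) (b::B) (w::W) _ _ _ U) => //; try eqs.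
have nAW : lA != lW.
  by apply: (@disj _ _ [::] (a::A) ((y::Y) ++ (b::B)) (w::W) [::] _ _ _ U) => //; try eqs.
have nYB : lY != lB.
  by apply: (@disj _ _ (a::A) (y::Y) [::] (b::B) (w::W) _ _ _ U) => //; try eqs.
have nYW : lY != lW.
  by apply: (@disj _ _ (a::A) (y::Y) (b::B) (w::W) [::] _ _ _ U) => //; try eqs.
have nBW : lB != lW.
  by apply: (@disj _ _ ((a::A) ++ (y::Y)) (b::B) [::] (w::W) [::] _ _ _ U) => //; try eqs.
have nYA : lY != lA by rewrite eq_sym.
have nBA : lB != lA by rewrite eq_sym.
have nWA : lW != lA by rewrite eq_sym.
have nBY : lB != lY by rewrite eq_sym.
have nWY : lW != lY by rewrite eq_sym.
have nWB : lW != lB by rewrite eq_sym.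
have [->|xA] := eqVneq x lA.
  rewrite tpermL (@tpermD _ lY lW lB) //.
  rewrite (next_blockend (p:=[::]) (h:=a) (t:=A) (y:=w) (q:=W ++ b::B ++ y::Y) _ U'); try eqs.
  by rewrite (next_blockend (p:=a::A ++ y::Y) (h:=b) (t:=B) (y:=w) (q:=W) _ U); try eqs.
have [->|xB] := eqVneq x lB.
  rewrite tpermR (@tpermD _ lY lW lA) 1?eq_sym //.
  rewrite (next_blockend (p:=a::A ++ w::W) (h:=b) (t:=B) (y:=y) (q:=Y) _ U'); try eqs.
  by rewrite (next_blockend (p:=[::]) (h:=a) (t:=A) (y:=y) (q:=Y ++ b::B ++ w::W) _ U); try eqs.
have [->|xW] := eqVneq x lW.
  rewrite (@tpermD _ lA lB lW) // tpermR.
  rewrite (next_blockend (p:=a::A) (h:=w) (t:=W) (y:=b) (q:=B ++ y::Y) _ U'); try eqs.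
  by rewrite (next_blockend (p:=a::A) (h:=y) (t:=Y) (y:=b) (q:=B ++ w::W) _ U); try eqs.
have [->|xY] := eqVneq x lY.
  rewrite (@tpermD _ lA lB lY) 1?eq_sym // tpermL.
  rewrite (next_wrap (a:=a) (M := A ++ w::W ++ b::B) (h:=y) (t:=Y) _ U'); try eqs.
  by rewrite (next_wrap (a:=a) (M := A ++ y::Y ++ b :: B) (h:=w) (t:=W) _ U); try eqs.
rewrite (@tpermD _ lA lB x) 1?eq_sym // (@tpermD _ lY lW x) 1?eq_sym //.
have [xin|xA'] := boolP (x \in a :: A).
  rewrite (next_interior (p:=[::]) (h:=a) (t:=A) (q:=w :: W ++ b :: B ++ y :: Y) _ U') //; try eqs.
  by rewrite (next_interior (p:=[::]) (h:=a) (t:=A) (q:=y :: Y ++ b :: B ++ w :: W) _ U) //; try eqs.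
have [xin|xB'] := boolP (x \in b :: B).
  rewrite (next_interior (p:=a :: A ++ w :: W) (h:=b) (t:=B) (q:=y :: Y) _ U') //; try eqs.
  by rewrite (next_interior (p:=a::A ++ y :: Y) (h:=b) (t:=B) (q:=w :: W) _ U) //; try eqs.
have [xin|xW'] := boolP (x \in w :: W).
  rewrite (next_interior (p:=a :: A) (h:=w) (t:=W) (q:=b :: B ++ y :: Y) _ U') //; try eqs.
  by rewrite (next_interior (p:=a::A ++ y :: Y ++ b :: B) (h:=w) (t:=W) (q:=[::]) _ U) //; try eqs.
have [xin|xY'] := boolP (x \in y :: Y).
  rewrite (next_interior (p:=a :: A ++ w :: W ++ b :: B) (h:=y) (t:=Y) (q:=[::]) _ U') //; try eqs.
  by rewrite (next_interior (p:=a::A) (h:=y) (t:=Y) (q:=b :: B ++ w :: W) _ U) //; try eqs.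
have nin : forall L, L = (a::A) ++ (y :: Y) ++ (b :: B) ++ (w :: W) \/ L = (a::A) ++ (w :: W) ++ (b :: B) ++ (y :: Y) -> next L x = x.
  move=> L HL; rewrite next_nth; case: ifP => // /negP[].
  by case: HL => ->; rewrite !mem_cat (negbTE xA') (negbTE xB') (negbTE xW') (negbTE xY').
rewrite [LHS]nin; last by right; eqs.
by rewrite nin //; left; eqs.
Qed.

Lemma glue (T : finType) (z : T) X A Y B Z :
  uniq (z :: X ++ A ++ Y ++ B ++ Z) -> A != [::] -> B != [::] ->
  exists x1 y1 x2 y2 : T, forall x,
    next (z :: X ++ B ++ Y ++ A ++ Z) x =
    next (z :: X ++ A ++ Y ++ B ++ Z) (tperm x1 y1 (tperm x2 y2 x)).
Proof.
move=> U0 nA nB.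
have U0' : uniq (z :: X ++ B ++ Y ++ A ++ Z).
  rewrite -(perm_uniq (_ : perm_eq (z :: X ++ A ++ Y ++ B ++ Z) _)) //.
  by apply/seq.permP => q; rewrite /= !count_cat; lia.
have Ec : forall x, next (z :: X ++ A ++ Y ++ B ++ Z) x = next (A ++ Y ++ B ++ (Z ++ z :: X)) x.
  move=> x; rewrite -(next_rot (size (z :: X)) U0).
  have -> : z :: X ++ A ++ Y ++ B ++ Z = (z :: X) ++ (A ++ Y ++ B ++ Z) by [].
  by rewrite rot_size_cat -!catA.
have Ec' : forall x, next (z :: X ++ B ++ Y ++ A ++ Z) x = next (A ++ (Z ++ z :: X) ++ B ++ Y) x.
  move=> x; rewrite -(next_rot (size (z :: X)) U0').
  have -> : z :: X ++ B ++ Y ++ A ++ Z = (z :: X) ++ (B ++ Y ++ A ++ Z) by [].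
  rewrite rot_size_cat.
  have U1 : uniq ((B ++ Y ++ A ++ Z) ++ z :: X) by rewrite -rot_size_cat rot_uniq.
  rewrite -(next_rot (size (B ++ Y)) U1).
  have -> : (B ++ Y ++ A ++ Z) ++ z :: X = (B ++ Y) ++ (A ++ Z ++ z :: X) by rewrite -!catA.
  by rewrite rot_size_cat -!catA.
suff [x1 [y1 [x2 [y2 H]]]] : exists x1 y1 x2 y2 : T, forall x,
    next (A ++ (Z ++ z :: X) ++ B ++ Y) x =
    next (A ++ Y ++ B ++ (Z ++ z :: X)) (tperm x1 y1 (tperm x2 y2 x)).
  by exists x1, y1, x2, y2 => x; rewrite Ec Ec' H.
have U : uniq (A ++ Y ++ B ++ (Z ++ z :: X)).
  move: U0; rewrite -(rot_uniq (size (z::X))).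
  by rewrite (_ : z :: X ++ A ++ Y ++ B ++ Z = (z :: X) ++ (A ++ Y ++ B ++ Z)) // rot_size_cat -!catA.
clear Ec Ec' U0 U0'; move: U.
case: A nA => [|a A] // _; case: B nB => [|b B] // _.
case EW : (Z ++ z :: X) => [|w W]; first by case: Z EW.
exact: block_swap.
Qed.

Section Cyc.
Variable T : finType.
Implicit Types u : {perm T}.

Lemma porbit_fconnect u x y : (y \in porbit u x) = fconnect u x y.
Proof.
apply/porbitP/idP => [[i ->]|/iter_findex <-]; first by rewrite permX fconnect_iter.
by exists (findex u x y); rewrite permX.
Qed.

Lemma ncycles_perm u : ncycles u = #|porbits u|.
Proof.
have sym : connect_sym (frel u) := fconnect_sym (@perm_inj _ u).
have -> : porbits u = porbit u @: [set x | froots u x].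
  apply/setP => S; apply/imsetP/imsetP => [[x _ ->]|[x _ ->]]; last by exists x.
  exists (froot u x); first by rewrite inE (roots_root sym).
  by apply/eqP; rewrite eq_porbit_mem porbit_fconnect sym connect_root.
rewrite card_in_imset.
  by rewrite /ncycles /n_comp_mem cardsE; apply: eq_card => x; rewrite !inE andbT.
move=> x y; rewrite !inE => rx ry /eqP; rewrite eq_porbit_mem porbit_fconnect.
by move/(fingraph.rootP sym); rewrite (eqP rx) (eqP ry).
Qed.

Lemma porbits_tperm_le u x y : #|porbits u| <= (#|porbits (tperm x y * u)|).+1.
Proof.
have [->|nxy] := eqVneq x y; first by rewrite tperm1 mul1g.
have := porbits_mul_tperm u x y; rewrite nxy; case: (x \notin _) => /=; lia.
Qed.

Lemma porbits1 : #|porbits (1 : {perm T})| = #|T|.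
Proof.
rewrite card_imset //= => x y /eqP; rewrite eq_porbit_mem => /porbitP[i ->].
by rewrite expg1n perm1.
Qed.
End Cyc.

Section IntPart.
Local Open Scope ring_scope.

Lemma uniq_map_inj (T1 T2 : eqType) (f : T1 -> T2) s x y :
  uniq (map f s) -> x \in s -> y \in s -> f x = f y -> x = y.
Proof.
elim: s => //= z s IH /andP[nz U]; rewrite !inE => /predU1P[->|xs] /predU1P[->|ys] // E.
- by move: nz; rewrite E map_f.
- by move: nz; rewrite -E map_f.
- exact: IH.
Qed.

Lemma enc_inj n v1 v2 : (`|v1| <= n)%N -> (`|v2| <= n)%N -> enc n v1 = enc n v2 -> v1 = v2.
Proof.
move=> h1 h2 /(congr1 val); rewrite /enc /= !inordK; try lia.
Qed.

Section SP.
Variable n : nat.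

Lemma sp_size b : signed_perm n b -> size b = n.
Proof. by case/andP => /eqP. Qed.

Lemma sp_abs b x : signed_perm n b -> x \in b -> (0 < `|x| <= n)%N.
Proof.
move=> /andP[_ P] xb; have : `|x|%N \in iota 1 n by rewrite -(perm_mem P) map_f.
rewrite mem_iota; lia.
Qed.

Lemma sp_uniq_abs b : signed_perm n b -> uniq [seq `|x|%N | x <- b].
Proof. by case/andP => _ P; rewrite (perm_uniq P) iota_uniq. Qed.

Lemma st_uniq b : signed_perm n b -> uniq (s_tilde_seq b).
Proof.
move=> sp; have ab := sp_abs sp; have U := sp_uniq_abs sp.
rewrite /s_tilde_seq /= cat_uniq mem_cat negb_or (map_uniq U).
rewrite (map_inj_uniq oppr_inj) rev_uniq.
apply/and4P; split => //; first (apply/andP; split).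
- by apply/negP => /ab.
- apply/negP => /mapP[y]; rewrite mem_rev => /ab.
  by move=> h /eqP; rewrite eq_sym oppr_eq0 => /eqP yz; move: h; rewrite yz.
- apply/hasPn => y /mapP[z]; rewrite mem_rev => zb ->; apply/negP => nzb.
  have E := uniq_map_inj U nzb zb; rewrite abszN in E.
  have : - z = z by apply: E.
  move=> h; have z0 : z = 0 by lia.
  by move: (ab _ zb); rewrite z0.
exact: map_uniq U.
Qed.

Lemma st_small b v : signed_perm n b -> v \in s_tilde_seq b -> (`|v| <= n)%N.
Proof.
move=> sp; rewrite /s_tilde_seq /= inE mem_cat => /orP[/eqP->//|/orP[/(sp_abs sp)|]].
  by case/andP.
by case/mapP => y; rewrite mem_rev => /(sp_abs sp) h ->; rewrite abszN; case/andP: h.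
Qed.

Lemma enc_uniq b : signed_perm n b -> uniq (map (enc n) (s_tilde_seq b)).
Proof.
move=> sp; rewrite map_inj_in_uniq ?st_uniq // => x y hx hy.
by apply: enc_inj; apply: st_small hx || apply: st_small hy.
Qed.
End SP.

Definition negs (s : seq int) := [seq - x | x <- rev s].

Lemma negsK s : negs (negs s) = s.
Proof. by rewrite /negs map_rev -map_comp (eq_map (@opprK _)) map_id revK. Qed.

Lemma st_cat3 X A D : s_tilde_seq (X ++ A ++ D) =
  0 :: X ++ A ++ (D ++ negs D) ++ negs A ++ negs X.
Proof. by rewrite /s_tilde_seq /negs /= !rev_cat !map_cat -!catA. Qed.

Lemma rev_decomp b i j : (1 <= i <= j)%N -> (j <= size b)%N ->
  b = take i.-1 b ++ drop i.-1 (take j b) ++ drop j b /\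
  reversal i j b = take i.-1 b ++ negs (drop i.-1 (take j b)) ++ drop j b /\
  drop i.-1 (take j b) != [::].
Proof.
case: i => // i hij hj /=; split; last split => //.
  by rewrite catA -{1}(take_takel b (_ : i <= j)%N) ?cat_take_drop //; lia.
rewrite -size_eq0 size_drop size_take -lt0n; case/andP: hij => _ hij; set m := size b in hj *; case: (ltnP j m) => h; lia.
Qed.

Lemma sp_rev n b i j : signed_perm n b -> valid_reversal n (i, j) ->
  signed_perm n (reversal i j b).
Proof.
move=> sp /andP[/andP[h1 h2] h3].
have sb := sp_size sp.
have hb1 : (1 <= i <= j)%N by rewrite h1 h2.
have hb2 : (j <= size b)%N by rewrite sb.
have [E1 [E2 _]] := rev_decomp hb1 hb2.
case/andP: sp => /eqP sz P.
rewrite /signed_perm E2; apply/andP; split.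
  by rewrite !size_cat /negs size_map size_rev -!size_cat -E1 sz.
apply: perm_trans P; rewrite [in X in perm_eq _ X]E1 !map_cat perm_cat2l perm_cat2r /negs -map_comp.
rewrite (eq_map (g := absz) (fun x => abszN x)) map_rev.
by rewrite perm_rev perm_refl.
Qed.

Lemma sp_id n : signed_perm n (id_signed n).
Proof.
rewrite /signed_perm /id_signed size_map size_iota eqxx /= -map_comp.
by rewrite (@eq_map _ _ _ id) ?map_id ?perm_refl.
Qed.

Lemma pr_seq n : p_r_seq n = rev (s_tilde_seq (id_signed n)).
Proof.
rewrite /p_r_seq /s_tilde_seq /id_signed /= rev_cons rev_cat -cats1 -catA.
by rewrite !map_rev revK -map_comp.
Qed.

Definition Cn n b := ncycles (fun x => p_r n (s_tilde n b x)).

Lemma ncycles_ext (T : finType) (f g : T -> T) : f =1 g -> ncycles f = ncycles g.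
Proof. by move=> e; rewrite /ncycles; apply: eq_fcard. Qed.

Lemma step_core n X A D : signed_perm n (X ++ A ++ D) -> signed_perm n (X ++ negs A ++ D) ->
  A != [::] -> (Cn n (X ++ negs A ++ D) <= (Cn n (X ++ A ++ D)).+2)%N.
Proof.
move=> sp sp' nA.
have U := enc_uniq sp; have U' := enc_uniq sp'.
have Up : uniq (map (enc n) (p_r_seq n)) by rewrite pr_seq map_rev rev_uniq enc_uniq // sp_id.
pose S := perm (can_inj (prev_next U)).
pose S' := perm (can_inj (prev_next U')).
pose P := perm (can_inj (prev_next Up)).
have C1 : Cn n (X ++ A ++ D) = #|porbits (S * P)%g|.
  by rewrite -ncycles_perm /Cn; apply: ncycles_ext => x; rewrite permM !permE.
have C2 : Cn n (X ++ negs A ++ D) = #|porbits (S' * P)%g|.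
  by rewrite -ncycles_perm /Cn; apply: ncycles_ext => x; rewrite permM !permE.
pose e := enc n.
have Eb : map e (s_tilde_seq (X ++ A ++ D)) = e 0 :: map e X ++ map e A ++
   map e (D ++ negs D) ++ map e (negs A) ++ map e (negs X).
  by rewrite st_cat3 /= !map_cat.
have Eb' : map e (s_tilde_seq (X ++ negs A ++ D)) = e 0 :: map e X ++ map e (negs A) ++
   map e (D ++ negs D) ++ map e A ++ map e (negs X).
  by rewrite st_cat3 negsK /= !map_cat.
have U0 := U; rewrite -/e Eb in U0.
have nA' : map e A != [::] by rewrite -size_eq0 size_map size_eq0.
have nB' : map e (negs A) != [::].
  by rewrite -size_eq0 size_map /negs size_map size_rev size_eq0.
have [x1 [y1 [x2 [y2 H]]]] := glue U0 nA' nB'.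
have ES : S' = (tperm x2 y2 * (tperm x1 y1 * S))%g.
  have eS : S =1 next [seq e i | i <- s_tilde_seq (X ++ A ++ D)] := permE _.
  have eS' : S' =1 next [seq e i | i <- s_tilde_seq (X ++ negs A ++ D)] := permE _.
  by apply/permP => x; rewrite !permM eS eS' Eb Eb' H.
have ES' : (S * P = tperm x1 y1 * (tperm x2 y2 * (S' * P)))%g.
  by rewrite ES -!mulgA !tpermKg.
rewrite C1 C2 ES'.
apply: leq_trans (porbits_tperm_le _ x2 y2) _.
by rewrite ltnS porbits_tperm_le.
Qed.

Lemma step n b i j : signed_perm n b -> valid_reversal n (i, j) ->
  (Cn n (reversal i j b) <= (Cn n b).+2)%N.
Proof.
move=> sp v.
have sp' := sp_rev sp v.
case/andP: v => /andP[h1 h2] h3.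
have hb1 : (1 <= i <= j)%N by rewrite h1 h2.
have hb2 : (j <= size b)%N by rewrite (sp_size sp).
have [E1 [E2 nA]] := rev_decomp hb1 hb2.
rewrite E2 in sp' *; rewrite [in Cn n b]E1; rewrite E1 in sp.
exact: step_core.
Qed.

Lemma chain n rs b : signed_perm n b -> all (valid_reversal n) rs ->
  (Cn n (apply_reversals rs b) <= Cn n b + (size rs).*2)%N.
Proof.
elim: rs b => [|[i j] rs IH] b sp /=; first by rewrite addn0.
case/andP => v vs.
have := IH _ (sp_rev sp v) vs; have := step sp v.
rewrite /apply_reversals /= doubleS; lia.
Qed.

Lemma Cn_id n : Cn n (id_signed n) = n.*2.+1.
Proof.
have Uc := enc_uniq (sp_id n).
rewrite /Cn (@ncycles_ext _ _ id); first by rewrite /ncycles fcard_id card_ord.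
move=> x; rewrite /p_r /s_tilde /cycle_fun pr_seq map_rev (next_rev Uc).
exact: prev_next.
Qed.

End IntPart.

Theorem theorem4 (n : nat) (a : seq int) :
  signed_perm n a ->
  forall k : nat, sortable_in n a k ->
    (n.*2.+1 - ncycles (fun x => p_r n (s_tilde n a x)) <= k.*2)%N.
Proof.
move=> sp k [rs [sz va ap]].
have := chain sp va; rewrite ap Cn_id sz /Cn; lia.
Qed.
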